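(* Let $X$ be a finite set, $t_1<\dots<t_M$ real numbers and $(\mathcal{P}^{t_m})_{m\le M}$ partitions of $X$, with continuous-indexed Multiscale Clustering Filtration $(K^t)_{t\ge t_1}$ and clique complex filtration $(L^t)_{t\ge t_1}$ of the Cluster Assignment Graph, and let $K:=K^{t_M}$. If the sequence is strictly hierarchical, i.e. $\mathcal{P}^{t_1}\le\dots\le\mathcal{P}^{t_M}$, then $H_k^p(L^t)\cong H_k^p(K^t)$ for all integers $0\le k\le\dim(K)-1$, all $t\ge t_1$ and all $p\ge0$.
   Context: A partition of $X$ is a collection of non-empty pairwise disjoint subsets (clusters) whose union is $X$; $\mathcal{P}\le\mathcal{Q}$ means every cluster of $\mathcal{P}$ lies in a cluster of $\mathcal{Q}$. For a finite non-empty set $C$, $\Delta C$ is the set of all non-empty subsets of $C$. The MCF is $K^{t_m}:=\bigcup_{l\le m}\bigcup_{C\in\mathcal{P}^{t_l}}\Delta C$, and for $t\ge t_1$, $K^t:=K^{t_m}$ where $m$ is the largest index with $t_m\le t$. For $t\ge t_1$ let $G_t$ be the graph on $X$ in which distinct $x,y$ are adjacent iff there is $m$ with $t_m\le t$ such that $x,y$ lie in the same cluster of $\mathcal{P}^{t_m}$; $L^t$ is the clique complex of $G_t$. $\dim(K)$ is the maximal dimension of a simplex in $K$. Homology is simplicial homology over $\mathbb{Z}_2$, and for a filtration $(F^t)$, $H_k^p(F^t)$ is the image of $H_k(F^t)\to H_k(F^{t+p})$ induced by inclusion. *)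

(* Defs.v *)
From HB Require Import structures.
From mathcomp Require Import all_boot all_order all_algebra.
Set Implicit Arguments. Unset Strict Implicit. Unset Printing Implicit Defensive.
Import Order.TTheory GRing.Theory Num.Theory.

Local Open Scope ring_scope.
Section Defs.
Variable X : finType.

Definition complex := {set {set X}}.

Definition Delta (C : {set X}) : complex := [set s | (s != set0) && (s \subset C)].

Definition refines (P Q : {set {set X}}) : Prop :=
  forall C, C \in P -> exists2 D, D \in Q & C \subset D.

(* dim K = maximal dimension of a simplex = (max cardinality) - 1;
   we expose the maximal cardinality (so dim K = maxcard K - 1). *)
Definition maxcard (K : complex) : nat := \max_(s in K) #|s|.

Definition chains := {ffun {set X} -> ('F_2)^o}.
Definition delta (S : {set X}) : chains := [ffun T => (T == S)%:R].

(* Simplicial boundary: sigma |-> sum of its codimension-1 faces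
   (vertices have boundary 0: non-augmented homology). *)
Definition bdry_fun (c : chains) : chains :=
  \sum_(s : {set X}) (c s : 'F_2) *: \sum_(x in s | s :\ x != set0) delta (s :\ x).

Definition bdry : 'End(chains) := linfun bdry_fun.

Definition Cch (k : nat) (K : complex) : {vspace chains} :=
  <<[seq delta s | s in [set s in K | #|s| == k.+1]]>>%VS.
Definition Zcyc (k : nat) (K : complex) : {vspace chains} :=
  (Cch k K :&: lker bdry)%VS.
Definition Bbd (k : nat) (K : complex) : {vspace chains} :=
  (bdry @: Cch k.+1 K)%VS.

(* For K1 a subcomplex of K2, the image of H_k(K1) -> H_k(K2) induced by
   inclusion is the quotient (Z_k(K1) + B_k(K2)) / B_k(K2).  We record the
   numerator and the denominator. *)
Definition im_num (k : nat) (K1 K2 : complex) : {vspace chains} :=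
  (Zcyc k K1 + Bbd k K2)%VS.
Definition im_den (k : nat) (K2 : complex) : {vspace chains} := Bbd k K2.

(* Linear isomorphism of quotients U1/B1 ~= U2/B2 (B1 <= U1, B2 <= U2):
   a linear map f with f(U1) <= U2, f(B1) <= B2 inducing a bijection.
   (Every linear map between such quotients lifts to the ambient space.) *)
Definition quot_iso (U1 B1 U2 B2 : {vspace chains}) : Prop :=
  exists f : 'End(chains),
    [/\ (f @: U1 <= U2)%VS, (f @: B1 <= B2)%VS,
        (forall u, u \in U1 -> f u \in B2 -> u \in B1)
      & (f @: U1 + B2 = U2)%VS].
End Defs.


Section Filt.
Variables (X : finType) (R : realFieldType) (M : nat)
          (ts : nat -> R) (Ps : nat -> {set {set X}}).

Definition MCF_at (m : nat) : complex X :=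
  \bigcup_(l < M | (l <= m)%N) \bigcup_(C in Ps l) Delta C.

Definition last_idx (t : R) : nat := \max_(m < M | ts m <= t) m.

Definition MCF (t : R) : complex X := MCF_at (last_idx t).

Definition CAG (t : R) (x y : X) : bool :=
  (x != y) && [exists l : 'I_M, (ts l <= t) && [exists C in Ps l, (x \in C) && (y \in C)]].

Definition CCF (t : R) : complex X :=
  [set s | (s != set0) && [forall x in s, forall y in s, (x != y) ==> CAG t x y]].
End Filt.

Definition PH_iso (X : finType) (R : realFieldType) (F G : R -> complex X)
  (k : nat) (t p : R) : Prop :=
  quot_iso (im_num k (F t) (F (t + p))) (im_den k (F (t + p)))
           (im_num k (G t) (G (t + p))) (im_den k (G (t + p))).

(* Main.v *)
Require Import Defs.
From HB Require Import structures.
From mathcomp Require Import all_boot all_order all_algebra.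
Import Order.TTheory GRing.Theory Num.Theory.
Local Open Scope ring_scope.

Section Aux.
Variables (X : finType) (R : realFieldType) (M : nat)
    (ts : nat -> R) (Ps : nat -> {set {set X}}).
Hypothesis hM : (0 < M)%N.
Hypothesis hmono : forall i j, (i < j < M)%N -> ts i < ts j.
Hypothesis hpart : forall m, (m < M)%N -> partition (Ps m) [set: X].
Hypothesis href : forall m, (m.+1 < M)%N -> refines (Ps m) (Ps m.+1).

Lemma chain_ref d : forall l C, (l + d < M)%N -> C \in Ps l ->
  exists2 D, D \in Ps (l + d)%N & C \subset D.
Proof.
elim: d => [|d IH] l C hl hC; first by exists C; rewrite ?addn0.
have hl' : (l + d < M)%N by apply: leq_trans hl; rewrite addnS.
have [D hD hCD] := IH l C hl' hC.
have hl2 : ((l + d).+1 < M)%N by rewrite -addnS.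
have [E hE hDE] := @href (l + d)%N hl2 D hD.
by exists E; [rewrite addnS | exact: subset_trans hDE].
Qed.

Lemma ts_le l m : (l <= m)%N -> (m < M)%N -> ts l <= ts m.
Proof.
rewrite leq_eqVlt => /orP[/eqP->|hlm] hm //.
by apply/ltW/hmono; rewrite hlm.
Qed.

Lemma CCF_MCF t : ts 0%N <= t -> CCF M ts Ps t = MCF M ts Ps t.
Proof.
move=> ht.
have hne : (0 < #|[pred i : 'I_M | (ts i <= t)%R]|)%N.
  by apply/card_gt0P; exists (Ordinal hM).
have [m0 hm0 hmax] := eq_bigmax_cond (fun i : 'I_M => nat_of_ord i) hne.
rewrite /MCF /last_idx hmax.
set m := nat_of_ord m0.
have hmM : (m < M)%N by rewrite /m ltn_ord.
have htm : ts m <= t by [].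
have hle : forall l : 'I_M, ts l <= t -> (l <= m)%N.
  move=> l hl; rewrite /m -hmax.
  exact: (@leq_bigmax_cond _ (fun i : 'I_M => (ts i <= t)%R) (fun i : 'I_M => nat_of_ord i) l hl).
have hlt : forall l : 'I_M, (l <= m)%N -> ts l <= t.
  by move=> l hl; apply: le_trans htm; apply: ts_le.
have [hcov htriv h0] := and3P (@hpart m hmM).
have up : forall (l : nat) C, (l <= m)%N -> C \in Ps l -> exists2 D, D \in Ps m & C \subset D.
  move=> l C hl hC; have := @chain_ref (m - l) l C; rewrite subnKC //.
  by move=> H; apply: H.
apply/setP => s; rewrite /CCF /MCF_at inE.
apply/idP/idP.
- case/andP => hs0 /forallP hcl.
  have [x hx] := set0Pn _ hs0.
  have hxc : x \in cover (Ps m) by rewrite (eqP hcov) inE.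
  set D := pblock (Ps m) x.
  have hD : D \in Ps m by exact: pblock_mem.
  have hxD : x \in D by rewrite mem_pblock.
  have hsD : s \subset D.
    apply/subsetP => y hy.
    case: (eqVneq x y) => [<-//|hxy].
    have := hcl x; rewrite hx /= => /forallP /(_ y); rewrite hy hxy /=.
    case/andP => _ /existsP [l /andP [hl /existsP [C /and3P [hC hxC hyC]]]].
    have [D' hD' hCD'] := up l C (hle l hl) hC.
    have : D' = D by symmetry; apply: def_pblock => //; exact: (subsetP hCD').
    by move=> <-; exact: (subsetP hCD').
  apply/bigcupP; exists (Ordinal hmM) => //.
  by apply/bigcupP; exists D => //; rewrite inE hs0 hsD.
- case/bigcupP => l hl /bigcupP [C hC]; rewrite inE => /andP [hs0 hsC].
  rewrite hs0 /=; apply/forallP => x; apply/implyP => hx.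
  apply/forallP => y; apply/implyP => hy; apply/implyP => hxy.
  rewrite /CAG hxy /=; apply/existsP; exists l; rewrite hlt //=.
  by apply/existsP; exists C; rewrite hC (subsetP hsC) // (subsetP hsC).
Qed.
End Aux.

Theorem corollary2 (X : finType) (R : realFieldType) (M : nat)
    (ts : nat -> R) (Ps : nat -> {set {set X}}) :
  (0 < M)%N ->
  (forall i j, (i < j < M)%N -> ts i < ts j) ->
  (forall m, (m < M)%N -> partition (Ps m) [set: X]) ->
  (* strictly hierarchical: P^{t_1} <= ... <= P^{t_M} *)
  (forall m, (m.+1 < M)%N -> refines (Ps m) (Ps m.+1)) ->
  forall (k : nat) (t p : R),
    (* 0 <= k <= dim(K) - 1, with K = K^{t_M} and dim K = maxcard K - 1 *)
    (k.+2 <= maxcard (MCF M ts Ps (ts M.-1)))%N ->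
    ts 0%N <= t -> 0 <= p ->
    PH_iso (CCF M ts Ps) (MCF M ts Ps) k t p.
Proof.
move=> hM hmono hpart href k t p _ ht hp.
rewrite /PH_iso (@CCF_MCF _ _ _ _ _ hM hmono hpart href _ ht).
have htp : ts 0%N <= t + p by apply: le_trans ht _; rewrite lerDl.
rewrite (@CCF_MCF _ _ _ _ _ hM hmono hpart href _ htp).
exists \1%VF; split.
- by rewrite lim1g.
- by rewrite lim1g.
- by move=> u _; rewrite lfunE.
- by rewrite lim1g; apply/eqP; rewrite eqEsubv addvSl /= subv_add subvv /= addvSr.
Qed.
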